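(* Let $n\ge 3$ be an odd integer. Then $$\sum_{k=1}^{\frac{n-1}{2}} (-1)^{k+1}\frac{\sin\frac{2k\pi}{n}}{\sin\frac{k\pi}{n}} = 1$$ and $$\sum_{k=1}^{\frac{n-1}{2}} (-1)^{k+1}\frac{\sin\frac{k\pi}{n}}{\sin\frac{2k\pi}{n}} = (-1)^{\frac{n+1}{2}}\left(\frac{n-1}{4}\right) + \frac{\chi_o\left(\frac{n-1}{2}\right)}{2},$$ where $\chi_o(m)=1$ if $m$ is odd and $\chi_o(m)=0$ if $m$ is even. *)

(* Defs.v *)
From Stdlib Require Import Reals Lra Lia Arith.
Open Scope R_scope.

Fixpoint sum1 (m : nat) (f : nat -> R) : R :=
  match m with
  | O => 0
  | S m' => sum1 m' f + f (S m')
  end.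

Definition chi_o (m : nat) : R := if Nat.odd m then 1 else 0.

(* Main.v *)
Require Import Defs.
From Stdlib Require Import Reals Arith Lra Lia.
Open Scope R_scope.

Fixpoint sum0 (N : nat) (f : nat -> R) : R :=
  match N with O => 0 | S N' => sum0 N' f + f N' end.

Lemma sum1_S m f : sum1 (S m) f = sum1 m f + f (S m). Proof. reflexivity. Qed.
Lemma sum0_S m f : sum0 (S m) f = sum0 m f + f m. Proof. reflexivity. Qed.

Lemma sum1_ext m f g : (forall k, (1 <= k <= m)%nat -> f k = g k) -> sum1 m f = sum1 m g.
Proof. induction m; intros H; simpl; auto. rewrite IHm by (intros; apply H; lia). rewrite H by lia. auto. Qed.

Lemma sum1_scal m c f : sum1 m (fun k => c * f k) = c * sum1 m f.
Proof. induction m; simpl; [ring|]. rewrite IHm; ring. Qed.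

Lemma sum0_scal m c f : sum0 m (fun k => c * f k) = c * sum0 m f.
Proof. induction m; simpl; [ring|]. rewrite IHm; ring. Qed.

Lemma sum1_sum0 m N F : sum1 m (fun k => sum0 N (fun l => F k l)) = sum0 N (fun l => sum1 m (fun k => F k l)).
Proof.
  induction m; simpl.
  - induction N; simpl; [auto|]. rewrite <- IHN; ring.
  - rewrite IHm. clear IHm. induction N; simpl; [ring|]. rewrite <- IHN; ring.
Qed.

Lemma cos_nPI k : cos (INR k * PI) = (-1) ^ k.
Proof. induction k; simpl pow. rewrite Rmult_0_l, cos_0; auto.
 rewrite S_INR, Rmult_plus_distr_r, Rmult_1_l, neg_cos, IHk; ring. Qed.

Lemma sin_nPI k : sin (INR k * PI) = 0.
Proof. induction k. rewrite Rmult_0_l, sin_0; auto.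
 rewrite S_INR, Rmult_plus_distr_r, Rmult_1_l, neg_sin, IHk; ring. Qed.

Lemma cos_odd_half l : cos ((2 * INR l + 1) * PI / 2) = 0.
Proof. replace ((2 * INR l + 1) * PI / 2) with (INR l * PI + PI/2) by field.
 rewrite cos_plus, sin_nPI, cos_PI2; ring. Qed.

Lemma two_cos u v : 2 * cos u * cos v = cos (v + u) + cos (v - u).
Proof. rewrite cos_plus, cos_minus; ring. Qed.

Lemma lemA a m : 2 * cos (a/2) * sum1 m (fun k => (-1)^(k+1) * cos (INR k * a))
   = cos (a/2) + (-1)^(m+1) * cos ((2 * INR m + 1) * a / 2).
Proof.
  induction m.
  - simpl. replace ((2*0+1)*a/2) with (a/2) by field. ring.
  - rewrite sum1_S, Rmult_plus_distr_l, IHm.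
    replace (2 * cos (a / 2) * ((-1) ^ (S m + 1) * cos (INR (S m) * a)))
      with ((-1) ^ (S m + 1) * (2 * cos (a / 2) * cos (INR (S m) * a))) by ring.
    rewrite two_cos.
    replace (INR (S m) * a + a/2) with ((2 * INR (S m) + 1) * a / 2) by (rewrite S_INR; field).
    replace (INR (S m) * a - a/2) with ((2 * INR m + 1) * a / 2) by (rewrite S_INR; field).
    rewrite !Nat.add_1_r. simpl pow. ring.
Qed.

Lemma lemB x N : 2 * cos x * sum0 N (fun l => (-1)^l * cos ((2 * INR l + 1) * x))
   = 1 - (-1)^N * cos (2 * INR N * x).
Proof.
  induction N.
  - simpl. replace (2*0*x) with 0 by ring. rewrite cos_0. ring.
  - rewrite sum0_S, Rmult_plus_distr_l, IHN.
    replace (2 * cos x * ((-1) ^ N * cos ((2 * INR N + 1) * x)))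
      with ((-1) ^ N * (2 * cos x * cos ((2 * INR N + 1) * x))) by ring.
    rewrite two_cos.
    replace ((2 * INR N + 1) * x + x) with (2 * INR (S N) * x) by (rewrite S_INR; ring).
    replace ((2 * INR N + 1) * x - x) with (2 * INR N * x) by ring.
    simpl pow. ring.
Qed.

Lemma alt_sum m : sum0 (2*m+1) (fun l => (-1)^l) = 1.
Proof. induction m. simpl; ring.
 replace (2 * S m + 1)%nat with (S (S (2*m+1))) by lia. rewrite !sum0_S, IHm.
 change ((-1)^(S(2*m+1))) with (-1 * (-1)^(2*m+1)). ring.
Qed.

Lemma sum0_ind N m A B : sum0 N (fun l => (-1)^l * (if Nat.eq_dec l m then A else B))
  = B * sum0 N (fun l => (-1)^l) + (if Nat.ltb m N then (-1)^m * (A - B) else 0).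
Proof.
  induction N. simpl. ring.
  rewrite sum0_S, sum0_S, IHN. destruct (Nat.eq_dec N m).
  - subst N. replace (Nat.ltb m m) with false by (symmetry; apply Nat.ltb_ge; lia).
    replace (Nat.ltb m (S m)) with true by (symmetry; apply Nat.ltb_lt; lia). ring.
  - destruct (Nat.ltb_spec m N); destruct (Nat.ltb_spec m (S N)); try lia; ring.
Qed.
Lemma sum0_ext N f g : (forall l, (l < N)%nat -> f l = g l) -> sum0 N f = sum0 N g.
Proof. induction N; intros H; simpl; auto. rewrite IHN by (intros; apply H; lia). rewrite H by lia. auto. Qed.

Lemma sum1_const m c : sum1 m (fun _ => c) = INR m * c.
Proof. induction m. simpl; ring. rewrite sum1_S, IHm, S_INR; ring. Qed.

Lemma frac_lt u v c : 0 < v -> 0 < c -> u < v -> c * (u / v) < c.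
Proof. intros. assert (u / v < 1).
 { apply (Rmult_lt_reg_r v); auto. unfold Rdiv; rewrite Rmult_assoc, Rinv_l; lra. }
 pose proof (Rmult_lt_compat_l c _ _ H0 H2). lra. Qed.

Lemma frac_pos u v c : 0 < v -> 0 < c -> 0 < u -> 0 < c * (u / v).
Proof. intros. apply Rmult_lt_0_compat; auto. apply Rdiv_lt_0_compat; auto. Qed.

Lemma frac_gt u v c : 0 < v -> 0 < c -> v < u -> c < c * (u / v).
Proof. intros. assert (1 < u / v).
 { apply (Rmult_lt_reg_r v); auto. unfold Rdiv; rewrite Rmult_assoc, Rinv_l; lra. }
 pose proof (Rmult_lt_compat_l c _ _ H0 H2). lra. Qed.

Lemma neg1_sq k : (-1)^k * (-1)^k = 1.
Proof. induction k; simpl; [ring|]. replace (-1 * (-1)^k * (-1 * (-1)^k)) with ((-1)^k*(-1)^k) by ring. auto. Qed.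
Lemma neg1_even q : (-1)^(2*q) = 1.
Proof. rewrite pow_mult. replace ((-1)^2) with 1 by ring. apply pow1. Qed.
Lemma neg1_odd q : (-1)^(2*q+1) = -1.
Proof. rewrite pow_add, neg1_even. ring. Qed.

Theorem theorem1 (n : nat) (Hn : (3 <= n)%nat) (Hodd : Nat.Odd n) :
  sum1 ((n - 1) / 2) (fun k => (-1) ^ (k + 1) *
      (sin (2 * INR k * PI / INR n) / sin (INR k * PI / INR n))) = 1
  /\
  sum1 ((n - 1) / 2) (fun k => (-1) ^ (k + 1) *
      (sin (INR k * PI / INR n) / sin (2 * INR k * PI / INR n)))
  = (-1) ^ ((n + 1) / 2) * ((INR n - 1) / 4) + chi_o ((n - 1) / 2) / 2.
Proof.
  destruct Hodd as [p Hp]. subst n.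
  replace ((2 * p + 1 - 1) / 2)%nat with p by
    (replace (2 * p + 1 - 1)%nat with (p * 2)%nat by lia; rewrite Nat.div_mul; lia).
  replace ((2 * p + 1 + 1) / 2)%nat with (p + 1)%nat by
    (replace (2 * p + 1 + 1)%nat with ((p + 1) * 2)%nat by lia; rewrite Nat.div_mul; lia).
  assert (HN : INR (2 * p + 1) = 2 * INR p + 1) by (rewrite plus_INR, mult_INR; simpl; ring).
  rewrite HN.
  assert (Hp1 : 1 <= INR p) by (apply (le_INR 1); lia).
  pose proof PI_RGT_0 as HPI.
  set (th := PI / (2 * INR p + 1)).
  assert (Hth : 0 < th) by (unfold th; apply Rdiv_lt_0_compat; lra).
  assert (Hx : forall k, (1 <= k <= p)%nat -> 0 < INR k * th < PI / 2).
  { intros k Hk. assert (1 <= INR k) by (apply (le_INR 1); lia).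
    assert (INR k <= INR p) by (apply le_INR; lia).
    replace (INR k * th) with (PI/2 * ((2 * INR k) / (2 * INR p + 1))) by (unfold th; field; lra).
    split. apply frac_pos; lra. apply frac_lt; lra. }
  assert (Hcos : forall k, (1 <= k <= p)%nat -> 0 < cos (INR k * th)).
  { intros k Hk. apply cos_gt_0; pose proof (Hx k Hk); lra. }
  assert (Hsin : forall k, (1 <= k <= p)%nat -> 0 < sin (INR k * th)).
  { intros k Hk. apply sin_gt_0; pose proof (Hx k Hk); lra. }
  split.
  - rewrite (sum1_ext _ _ (fun k => 2 * ((-1) ^ (k+1) * cos (INR k * th)))).
    2: { intros k Hk. replace (2 * INR k * PI / (2 * INR p + 1)) with (2 * (INR k * th)) by (unfold th; field; lra).
         replace (INR k * PI / (2 * INR p + 1)) with (INR k * th) by (unfold th; field; lra).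
         rewrite sin_2a. pose proof (Hsin k Hk). field. lra. }
    rewrite sum1_scal.
    pose proof (lemA th p) as H.
    replace ((2 * INR p + 1) * th / 2) with (PI / 2) in H by (unfold th; field; lra).
    rewrite cos_PI2 in H.
    assert (0 < cos (th / 2)).
    { apply cos_gt_0. lra. replace (th/2) with (PI/2 * (1 / (2 * INR p + 1))) by (unfold th; field; lra).
      apply frac_lt; lra. }
    set (S := sum1 p _) in *. apply (Rmult_eq_reg_l (cos (th/2))); [|lra].
    transitivity (2 * cos (th / 2) * S); [ring| rewrite H; ring].
  - rewrite (sum1_ext _ _ (fun k => 1/2 * sum0 (2*p+1) (fun l => (-1)^l * ((-1)^(k+1) * cos (INR k * ((2*INR l+1)*th)))))).
    2: { intros k Hk.
         replace (2 * INR k * PI / (2 * INR p + 1)) with (2 * (INR k * th)) by (unfold th; field; lra).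
         replace (INR k * PI / (2 * INR p + 1)) with (INR k * th) by (unfold th; field; lra).
         rewrite (sum0_ext _ _ (fun l => (-1)^(k+1) * ((-1)^l * cos((2*INR l+1)*(INR k*th))))).
         2: { intros l _. replace (INR k * ((2*INR l+1)*th)) with ((2*INR l+1)*(INR k*th)) by ring. ring. }
         rewrite sum0_scal.
         pose proof (lemB (INR k * th) (2*p+1)) as HB. rewrite HN, neg1_odd in HB.
         replace (2*(2*INR p+1)*(INR k*th)) with (0 + 2*INR k*PI) in HB by (unfold th; field; lra).
         rewrite cos_period, cos_0 in HB.
         set (S := sum0 _ _) in *.
         pose proof (Hcos k Hk). pose proof (Hsin k Hk).
         assert (S = 1 / cos (INR k * th)).
         { apply (Rmult_eq_reg_l (2 * cos (INR k * th))); [rewrite HB; field; lra | lra]. }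
         rewrite H1, sin_2a. field. lra. }
    rewrite sum1_scal, sum1_sum0.
    rewrite (sum0_ext _ _ (fun l => (-1)^l * (if Nat.eq_dec l p then - INR p else 1/2))).
    2: { intros l Hl. rewrite sum1_scal. f_equal. destruct (Nat.eq_dec l p).
      - subst l. replace ((2*INR p+1)*th) with PI by (unfold th; field; lra).
        rewrite (sum1_ext _ _ (fun _ => -1)).
        + rewrite sum1_const; ring.
        + intros k _. rewrite cos_nPI, pow_add. pose proof (neg1_sq k). simpl pow. nra.
      - pose proof (lemA ((2*INR l+1)*th) p) as H.
        replace ((2*INR p+1)*((2*INR l+1)*th)/2) with ((2*INR l+1)*PI/2) in H by (unfold th; field; lra).
        rewrite cos_odd_half in H.
        assert (Hc : cos ((2*INR l+1)*th/2) <> 0).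
        { assert (0 <= INR l) by apply pos_INR.
          destruct (Nat.lt_ge_cases l p) as [Hlp|Hlp].
          - apply Rgt_not_eq. apply Rlt_gt. apply lt_INR in Hlp.
            replace ((2*INR l+1)*th/2) with (PI/2 * ((2*INR l+1)/(2*INR p+1))) by (unfold th; field; lra).
            apply cos_gt_0. pose proof (frac_pos (2*INR l+1) (2*INR p+1) (PI/2)). lra.
            apply frac_lt; lra.
          - apply Rlt_not_eq. assert (Hlp' : (p < l)%nat) by lia. apply lt_INR in Hlp'.
            assert (Hl2 : INR l <= 2 * INR p) by (assert (Hl3 : (l <= 2*p)%nat) by lia; apply le_INR in Hl3; rewrite mult_INR in Hl3; simpl in Hl3; lra).
            apply cos_lt_0.
            + replace ((2*INR l+1)*th/2) with (PI/2 * ((2*INR l+1)/(2*INR p+1))) by (unfold th; field; lra).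
              apply frac_gt; lra.
            + replace ((2*INR l+1)*th/2) with (PI * ((INR l + 1/2)/(2*INR p+1))) by (unfold th; field; lra).
              pose proof (frac_lt (INR l + 1/2) (2*INR p+1) PI). lra. }
        set (S := sum1 p _) in *.
        apply (Rmult_eq_reg_l (2 * cos ((2*INR l+1)*th/2))); [|lra].
        replace ((2*INR l+1)*th/2) with (((2*INR l+1)*th)/2) by reflexivity.
        rewrite H. field; auto. }
    rewrite sum0_ind, alt_sum.
    replace (Nat.ltb p (2*p+1)) with true by (symmetry; apply Nat.ltb_lt; lia).
    unfold chi_o. destruct (Nat.odd p) eqn:E.
    + apply Nat.odd_spec in E. destruct E as [q Hq].
      assert (Hs : (-1)^p = -1) by (rewrite Hq; apply neg1_odd).
      rewrite pow_add, Hs. field.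
    + assert (E' : Nat.even p = true) by (rewrite <- Nat.negb_odd, E; reflexivity).
      apply Nat.even_spec in E'. destruct E' as [q Hq].
      assert (Hs : (-1)^p = 1) by (rewrite Hq; apply neg1_even).
      rewrite pow_add, Hs. field.
Qed.
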